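(* Let $X$ be a topological space. The following are equivalent: (1) $X$ is hereditarily Baire; (2) every fragmentable function $f\colon X\to\mathbb R$ has (PCP). Moreover, if $X$ is perfectly normal, (1) and (2) are equivalent to: (3) every function $f\colon X\to\mathbb R$ with the Lebesgue property has (PCP).
   Context: A topological space is Baire if every nonempty open subset of it is nonmeager in it; it is hereditarily Baire if every nonempty closed subspace is Baire. For $f\colon X\to\mathbb R$: $f$ is fragmentable if for every $\varepsilon>0$ and every nonempty closed $F\subseteq X$ there is an open $U$ with $U\cap F\neq\emptyset$ and $\operatorname{diam} f(U\cap F)<\varepsilon$; $f$ has (PCP) if for every nonempty closed $F\subseteq X$ the restriction $f|_F$ has a point of continuity; $f$ has the Lebesgue property if for every $\varepsilon>0$ there are closed sets $X_n$ ($n\in\mathbb N$) with $X=\bigcup_n X_n$ and $\operatorname{diam} f(X_n)\le\varepsilon$ for all $n$. *)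

(* Defs.v *)
From HB Require Import structures.
From mathcomp Require Import all_boot all_order all_algebra.
From mathcomp Require Import all_classical all_reals all_analysis.
From mathcomp Require Import borel_hierarchy.
Set Implicit Arguments. Unset Strict Implicit. Unset Printing Implicit Defensive.
Import Order.TTheory GRing.Theory Num.Theory.
Import numFieldNormedType.Exports.
Local Open Scope classical_set_scope.
Local Open Scope ring_scope.

Section Relative.
Context {T : topologicalType}.

Definition rel_open (F U : set T) := exists2 V : set T, open V & U = V `&` F.

Definition rel_closure (F A : set T) := closure A `&` F.

Definition rel_nowhere_dense (F A : set T) :=
  A `<=` F /\
  forall U, rel_open F U -> U !=set0 -> ~ (U `<=` rel_closure F A).

Definition rel_meager (F A : set T) :=
  exists2 N : (set T)^nat, (forall n, rel_nowhere_dense F (N n)) &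
    A `<=` \bigcup_n N n.

Definition Baire_on (F : set T) :=
  forall U, rel_open F U -> U !=set0 -> ~ rel_meager F U.

Definition hereditarily_Baire :=
  forall F : set T, closed F -> F !=set0 -> Baire_on F.

Definition perfectly_normal :=
  normal_space T /\ forall A : set T, closed A -> Gdelta A.
End Relative.

Section Functions.
Context {R : realType} {T : topologicalType}.

Definition diam_lt (S : set R) (eps : R) :=
  exists2 d : R, d < eps & forall x y, S x -> S y -> `|x - y| <= d.

Definition diam_le (S : set R) (eps : R) :=
  forall x y, S x -> S y -> `|x - y| <= eps.

Definition fragmentable (f : T -> R) :=
  forall eps : R, 0 < eps -> forall F : set T, closed F -> F !=set0 ->
    exists U : set T, [/\ open U, (U `&` F) !=set0 & diam_lt (f @` (U `&` F)) eps].

Definition PCP (f : T -> R) :=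
  forall F : set T, closed F -> F !=set0 ->
    exists2 x, F x & f @ within F (nbhs x) --> f x.

Definition Lebesgue_property (f : T -> R) :=
  forall eps : R, 0 < eps ->
    exists X_ : (set T)^nat, [/\ forall n, closed (X_ n),
      \bigcup_n X_ n = setT & forall n, diam_le (f @` X_ n) eps].
End Functions.

(* Main.v *)
Require Import Defs.
From HB Require Import structures.
From mathcomp Require Import all_boot all_order all_algebra.
From mathcomp Require Import all_classical all_reals all_analysis.
From mathcomp Require Import borel_hierarchy.
From mathcomp Require Import lra.

Section Helpers.
Set Implicit Arguments. Unset Strict Implicit. Unset Printing Implicit Defensive.
Import Order.TTheory GRing.Theory Num.Theory.
Import numFieldNormedType.Exports.
Local Open Scope classical_set_scope.
Local Open Scope ring_scope.
Lemma archi_inv (R : realType) (e : R) : 0 < e -> exists N : nat, N.+1%:R^-1 < e.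
Proof.
move=> e0; have [N _ H] := near_infty_natSinv_lt (PosNum e0).
by exists N; exact: (H N (leqnn N)).
Qed.

Lemma L3 (R : realType) (X : topologicalType) (E : set X) (D : (set X)^nat) :
  closed E -> E !=set0 -> (forall n, closed (D n)) -> (forall x, E x -> exists n, D n x) ->
  (forall n W, open W -> (W `&` E) !=set0 -> exists y, [/\ W y, E y & ~ D n y]) ->
  exists f : X -> R, [/\ fragmentable f, ~ PCP f & (@perfectly_normal X -> Lebesgue_property f)].
Proof.
move=> cE E0 cD cov avD.
have spec : forall x, exists v : R, ((forall n, ~ D n x) /\ v = 0) \/
    (exists n, [/\ D n x, (forall k, (k < n)%N -> ~ D k x) & v = n.+1%:R^-1]).
  move=> x; case: (pselect (exists n, D n x)) => [ex|nex].
  - have ex' : exists n, `[< D n x >] by case: ex => n ?; exists n; apply/asboolP.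
    case: (ex_minnP ex') => m /asboolP Dm minm.
    exists m.+1%:R^-1; right; exists m; split => // k km Dk.
    by have := minm k (asboolT Dk); rewrite leqNgt km.
  - by exists 0; left; split => // n Dn; apply: nex; exists n.
have [f fspec] := choice spec.
pose Gp n x := exists k, (k < n)%N /\ D k x.
have lvl : forall x n, D n x -> (forall k, (k < n)%N -> ~ D k x) -> f x = n.+1%:R^-1.
  move=> x n Dn mn; case: (fspec x) => [[nD _]|[m [Dm mm ->]]]; first by case: (nD n).
  by case: (ltngtP m n) => [mn'|nm|-> //]; [case: (mn m mn') | case: (mm n nm)].
have small : forall x N, ~ Gp N x -> 0 <= f x <= N.+1%:R^-1.
  move=> x N nG; case: (fspec x) => [[_ ->]|[m [Dm mm ->]]].
    by rewrite lexx /= invr_ge0 ler0n.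
  have Nm : (N <= m)%N by rewrite leqNgt; apply/negP => mN; apply: nG; exists m.
  by rewrite invr_ge0 ler0n /= lef_pV2 ?posrE ?ltr0n // ler_nat ltnS.
have cG : forall n, closed (Gp n).
  elim=> [|n IH].
    have -> : Gp 0%N = set0 by apply/seteqP; split => x // [k []].
    exact: closed0.
  have -> : Gp n.+1 = Gp n `|` D n.
    apply/seteqP; split => x.
    - move=> [k [kn Dk]]; rewrite ltnS leq_eqVlt in kn; case/orP: kn => [/eqP kE|kn].
        by right; rewrite -kE.
      by left; exists k.
    - by case=> [[k [kn Dk]]|Dn]; [exists k; split => //; apply: ltnW | exists n].
  exact: closedU.
have avoidG : forall N W, open W -> (W `&` E) !=set0 -> exists y, [/\ W y, E y & ~ Gp N y].
  elim=> [|N IH] W oW WE.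
    by case: WE => y [Wy Ey]; exists y; split => // -[k []].
  have [y0 [Wy0 Ey0 nD]] := avD N W oW WE.
  have oW' : open (W `&` ~` D N) by apply: openI => //; rewrite openC.
  have [y [[Wy nDy] Ey nGy]] := IH (W `&` ~` D N) oW' (ex_intro _ y0 (conj (conj Wy0 nD) Ey0)).
  exists y; split => // -[k [kN Dk]]; rewrite ltnS leq_eqVlt in kN.
  case/orP: kN => [/eqP kE|kN]; first by apply: nDy; rewrite -kE.
  by apply: nGy; exists k.
exists f; split.
- move=> e e0 K cK K0.
  have [N Ne] := archi_inv e0.
  case: (pselect (exists x, K x /\ ~ Gp N x)) => [[x0 [Kx0 nG0]]|allG].
    exists (~` Gp N); split; [by rewrite openC | by exists x0 |].
    exists N.+1%:R^-1 => // a b [p [nGp Kp] <-] [q [nGq Kq] <-].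
    have /andP[h1 h2] := small p N nGp; have /andP[h3 h4] := small q N nGq.
    move: h1 h2 h3 h4; set d := N.+1%:R^-1 => h1 h2 h3 h4.
    by rewrite ler_norml; apply/andP; split; lra.
  have exm : exists m, `[< K `<=` Gp m >].
    exists N; apply/asboolP => x Kx; apply: contrapT => nG; apply: allG; by exists x.
  case: (ex_minnP exm) => m /asboolP Km minm.
  case: m Km minm => [|m] Km minm.
    by case: K0 => x Kx; case: (Km x Kx) => k [].
  have nKm : ~ K `<=` Gp m.
    by move=> H; have := minm m (asboolT H); rewrite ltnn.
  have [x0 [Kx0 nG0]] : exists x, K x /\ ~ Gp m x.
    apply: contrapT => H; apply: nKm => x Kx; apply: contrapT => nG; apply: H; by exists x.
  have const : forall y, K y -> ~ Gp m y -> f y = m.+1%:R^-1.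
    move=> y Ky nG; have [k [km Dk]] := Km y Ky; rewrite ltnS leq_eqVlt in km.
    case/orP: km => [/eqP kE|km]; last by case: nG; exists k.
    subst k; apply: lvl => // k km Dk'; apply: nG; by exists k.
  exists (~` Gp m); split; [by rewrite openC | by exists x0 |].
  by exists 0 => // a b [p [nGp Kp] <-] [q [nGq Kq] <-]; rewrite !const // subrr normr0.
- move=> pcp; have [x Ex cont] := pcp E cE E0.
  have [n0 Dn0] := cov x Ex.
  have [n [Dn mn fx]] : exists n, [/\ D n x, forall k, (k < n)%N -> ~ D k x & f x = n.+1%:R^-1].
    by case: (fspec x) => [[nD _]|//]; case: (nD n0).
  have fx0 : 0 < f x by rewrite fx invr_gt0 ltr0n.
  move/cvgrPdist_lt: cont => /(_ (f x / 2)) H.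
  have := H (divr_gt0 fx0 (ltr0Sn _ 1)); rewrite near_withinE nbhsE => -[W [oW Wx] WP].
  pose N := (n.+1 + n.+1)%N.
  have [y [Wy Ey nGy]] := avoidG N W oW (ex_intro _ x (conj Wx Ex)).
  have := WP y Wy Ey => /= lt.
  have /andP[h1 h2] := small y N nGy.
  have h : (N.+1%:R : R)^-1 <= f x / 2.
    rewrite fx -invfM -natrM lef_pV2 ?posrE ?ltr0n // ?muln_gt0 // ler_nat.
    by rewrite /N muln2 -addnn.
  move: h2 h; set d := (N.+1%:R : R)^-1 => h2 h; clear fx.
  have := ler_norm (f x - f y); lra.
- move=> [_ pn] e e0.
  have [N Ne] := archi_inv e0.
  have gd : forall k, exists A : (set X)^nat, (forall i, open (A i)) /\ Gp k = \bigcap_i A i.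
    by move=> k; have [A oA Ek] := pn _ (cG k); exists A.
  have [A Aspec] := choice gd.
  pose C k i := ~` A k i.
  have cC : forall k i, closed (C k i).
    by move=> k i; rewrite /C closedC; case: (Aspec k).
  have nGC : forall k x, ~ Gp k x -> exists i, C k i x.
    move=> k x nG; case: (Aspec k) => _ Ek; apply: contrapT => H; apply: nG.
    rewrite Ek => i _; apply: contrapT => nA; apply: H; by exists i.
  have CnG : forall k i x, C k i x -> ~ Gp k x.
    by move=> k i x Cx; case: (Aspec k) => _ Ek; rewrite Ek => H; apply: Cx; apply: H.
  pose Y (p : nat * nat) := if (p.1 < N)%N then D p.1 `&` C p.1 p.2 else C N p.2.
  exists (fun k => if unpickle k is Some p then Y p else set0); split.
  + move=> k; case: (unpickle k) => [[n i]|]; last exact: closed0.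
    by rewrite /Y /=; case: ifP => _; [apply: closedI | ].
  + apply/seteqP; split => // x _.
    case: (pselect (Gp N x)) => [[k [kN Dk]]|nG].
    * have [n [Dn mn fx]] : exists n, [/\ D n x, forall j, (j < n)%N -> ~ D j x & f x = n.+1%:R^-1].
        by case: (fspec x) => [[nD _]|//]; case: (nD k).
      have nN : (n < N)%N.
        have nk : (n <= k)%N by rewrite leqNgt; apply/negP => kn; apply: (mn k kn Dk).
        exact: leq_ltn_trans nk kN.
      have nGn : ~ Gp n x by move=> [j [jn Dj]]; apply: (mn j jn Dj).
      have [i Ci] := nGC n x nGn.
      by exists (pickle (n, i)) => //; rewrite pickleK /Y /= nN.
    * have [i Ci] := nGC N x nG; exists (pickle (N, i)) => //.
      by rewrite pickleK /Y /= ltnn.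
  + move=> k a b; case: (unpickle k) => [[n i]|]; last by move=> [? []].
    rewrite /Y /=; case: ifP => nN.
    * move=> [p [Dp Cp] <-] [q [Dq Cq] <-].
      have fp := lvl p n Dp (fun j jn Dj => CnG n i p Cp (ex_intro _ j (conj jn Dj))).
      have fq := lvl q n Dq (fun j jn Dj => CnG n i q Cq (ex_intro _ j (conj jn Dj))).
      by rewrite fp fq subrr normr0 ltW.
    * move=> [p Cp <-] [q Cq <-].
      have /andP[h1 h2] := small p N (CnG _ _ _ Cp).
      have /andP[h3 h4] := small q N (CnG _ _ _ Cq).
      move: h2 h4 Ne; set d := (N.+1%:R : R)^-1 => h2 h4 Ne.
      by rewrite ler_norml; apply/andP; split; lra.
Qed.
Lemma L1 (R : realType) (X : topologicalType) :
  @hereditarily_Baire X -> forall f : X -> R, fragmentable f -> PCP f.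
Proof.
move=> hB f frag F cF F0.
pose O n := [set x | exists U, [/\ open U, U x & diam_lt (f @` (U `&` F)) (n.+1%:R^-1 : R)]].
have key : exists2 x, F x & forall n, O n x.
  apply: contrapT => H.
  have nH : forall x, F x -> exists n, ~ O n x.
    move=> x Fx; apply: contrapT => H2; apply: H; exists x => // n.
    by apply: contrapT => H3; apply: H2; exists n.
  apply: (hB F cF F0 F); first by exists setT; [exact: openT | rewrite setTI].
    exact: F0.
  exists (fun n => F `&` ~` O n).
  + move=> n; split; first by move=> ? [].
    move=> W [V oV ->] [y [Vy Fy]] Wsub.
    have cl0 : closure (V `&` F) !=set0 by exists y; apply: subset_closure.
    have [U [oU [z [Uz Fz']] [d dlt dH]]] := frag (n.+1%:R^-1) ltac:(by []) (closure (V `&` F))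
       (@closed_closure _ _) cl0.
    have [w [[Vw Fw] Uw]] := Fz' U (open_nbhs_nbhs (conj oU Uz)).
    have [cw _] := Wsub w (conj Vw Fw).
    have [v [[Fv nOv] [Uv Vv]]] := cw (U `&` V) (open_nbhs_nbhs (conj (openI oU oV) (conj Uw Vw))).
    apply: nOv; exists (U `&` V); split => //; first exact: openI.
    exists d => // a b [p [[Up Vp] Fp] <-] [q [[Uq Vq] Fq] <-].
    apply: dH; [exists p | exists q] => //; split => //; apply: subset_closure; by split.
  + by move=> x Fx; have [n nO] := nH x Fx; exists n.
have [x Fx Ox] := key; exists x => //.
apply/cvgrPdist_lt => e e0.
have [n ne] := archi_inv e0.
have [U [oU Ux [d dlt dH]]] := Ox n.
rewrite near_withinE.
apply: filterS (open_nbhs_nbhs (conj oU Ux)) => t Ut Ft.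
apply: le_lt_trans (lt_trans dlt ne).
by apply: dH; [exists x | exists t].
Qed.
Lemma L4 (R : realType) (X : topologicalType) :
  @hereditarily_Baire X -> forall f : X -> R, Lebesgue_property f -> fragmentable f.
Proof.
move=> hB f Leb e e0 K cK K0.
have e20 : 0 < e / 2 by rewrite divr_gt0.
have [Xn [cX covX dX]] := Leb (e / 2) e20.
have : ~ (forall n, rel_nowhere_dense K (K `&` Xn n)).
  move=> H; apply: (hB K cK K0 K); first by exists setT; [exact: openT | rewrite setTI].
    exact: K0.
  exists (fun n => K `&` Xn n) => // x Kx.
  have : [set: X] x by [].
  by rewrite -covX => -[n _ Xnx]; exists n.
move=> /existsNP [n /not_andP [|]]; first by case; move=> ? [].
move=> /existsNP [U /not_implyP [[V oV ->] /not_implyP [VK0 /contrapT sub]]].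
exists V; split => //; exists (e / 2); first by rewrite ltr_pdivrMr // ltr_pMr // ltr1n.
have sX : forall p, V p -> K p -> Xn n p.
  move=> p Vp Kp; have [cp _] := sub p (conj Vp Kp).
  have := closureS (@subIsetr _ K (Xn n)) cp.
  by rewrite -(closure_id _).1.
move=> a b [p [Vp Kp] <-] [q [Vq Kq] <-].
by apply: dX; [exists p | exists q] => //; apply: sX.
Qed.
Lemma L2 (X : topologicalType) : ~ @hereditarily_Baire X ->
  exists E : set X, exists D : (set X)^nat,
  [/\ closed E, E !=set0, (forall n, closed (D n)), (forall x, E x -> exists n, D n x) &
   (forall n W, open W -> (W `&` E) !=set0 -> exists y, [/\ W y, E y & ~ D n y])].
Proof.
move=> /existsNP [F /not_implyP [cF /not_implyP [F0 /existsNP [U /not_implyP [[V oV UE] /not_implyP [U0 /contrapT [N Nnd cov]]]]]]].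
have UVF : forall z, U z -> V z /\ F z by move=> z; rewrite UE.
pose E := closure U.
have sUE : U `<=` E := @subset_closure _ U.
have key : forall W, open W -> (W `&` E) !=set0 -> (W `&` U) !=set0.
  move=> W oW [x [Wx Ex]]; have [y [Uy Wy]] := Ex W (open_nbhs_nbhs (conj oW Wx)).
  by exists y.
exists E, (fun n => if n is m.+1 then closure (N m) `&` E else E `&` ~` V); split.
- exact: closed_closure.
- by case: U0 => x Ux; exists x; apply: sUE.
- case=> [|n]; apply: closedI; try exact: closed_closure.
  by rewrite closedC.
- move=> x Ex; case: (pselect (V x)) => Vx; last by exists 0.
  have Fx : F x.
    by have := closureS (fun z Uz => (UVF z Uz).2) Ex; rewrite -(closure_id F).1.
  have Ux : U x by rewrite UE.
  have [n _ Nx] := cov x Ux; exists n.+1; split => //; exact: subset_closure.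
- move=> [|n] W oW WE; have [y [Wy Uy]] := key W oW WE; have [Vy Fy] := UVF y Uy.
  + by exists y; split => //; [exact: sUE | case].
  + have [_ nd] := Nnd n.
    apply: contrapT => H; apply: (nd (W `&` U)).
    * by exists (W `&` V); [exact: openI | rewrite UE setIA].
    * by exists y.
    move=> z [Wz Uz]; have [Vz Fz] := UVF z Uz; split => //.
    apply: contrapT => nc; apply: H; exists z; split => //; first exact: sUE.
    by case.
Qed.
End Helpers.

Theorem proposition2p9 (R : realType) (X : topologicalType) :
  (@hereditarily_Baire X <-> forall f : X -> R, fragmentable f -> PCP f) /\
  (@perfectly_normal X ->
     (@hereditarily_Baire X <-> forall f : X -> R, Lebesgue_property f -> PCP f)).
Proof.
split.
- split; first exact: (@L1 R X).
  move=> H; apply: contrapT => nhB.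
  have [E [D [cE E0 cD cov av]]] := @L2 X nhB.
  have [f [fr npcp _]] := @L3 R X E D cE E0 cD cov av.
  exact: npcp (H f fr).
- move=> pn; split.
  + by move=> hB f Lf; apply: (@L1 R X hB f); apply: (@L4 R X hB f Lf).
  + move=> H; apply: contrapT => nhB.
    have [E [D [cE E0 cD cov av]]] := @L2 X nhB.
    have [f [_ npcp Lb]] := @L3 R X E D cE E0 cD cov av.
    exact: npcp (H f (Lb pn)).
Qed.
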